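(* Let $F$ be a face of a polyhedron $Q\subset V$ and $v\in V$. Let $y\in\mathrm{relint}(\sigma_F)$ and let $H=\{x\in V:\langle y,x\rangle=\langle y,v\rangle\}$, $H^-=\{x\in V:\langle y,x\rangle\le\langle y,v\rangle\}$. Then for every $P\in\mathrm{Def}^+(Q)$, the affine cone $C_F+v$ tightly contains $P$ if and only if $P\subseteq H^-$ and $\emptyset\subsetneq P\cap H\subseteq\mathrm{lineal}(C_F)+v$.
   Context: $V$ is a finite-dimensional real vector space with inner product $\langle\cdot,\cdot\rangle$. For a polyhedron $Q$, $\Sigma_Q$ is its outer normal fan; for a face $F$, $\sigma_F\in\Sigma_Q$ is the cone of linear functionals attaining their maximum on $Q$ exactly on $F$; the tangent cone of $Q$ at $F$ is $C_F=\sigma_F^\vee=\mathrm{Cone}(v'-v\mid v\in F,v'\in Q)$. A polyhedron $P$ is an extended deformation of $Q$ if each cone of $\Sigma_P$ is a union of cones of $\Sigma_Q$; $\mathrm{Def}^+(Q)$ is the set of extended deformations of $Q$. $\mathrm{lineal}(C)$ is the lineality space of a cone $C$. A translate $C+v$ tightly contains a polyhedron $P$ if $P\subseteq C+v$ and $P\cap(\mathrm{lineal}(C)+v)\ne\emptyset$. *)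

(* Defs.v *)
(* V is modelled as 'rV[R]_n with the standard dot product. *)
From HB Require Import structures.
From mathcomp Require Import all_boot all_order all_algebra.
From mathcomp Require Import reals.
Set Implicit Arguments. Unset Strict Implicit. Unset Printing Implicit Defensive.
Import Order.TTheory GRing.Theory Num.Theory.
Local Open Scope ring_scope.

Definition vset (R : realType) (n : nat) := 'rV[R]_n -> Prop.

Definition dot (R : realType) (n : nat) (u v : 'rV[R]_n) : R :=
  \sum_(i < n) u 0 i * v 0 i.

Definition is_polyhedron (R : realType) (n : nat) (P : vset R n) : Prop :=
  exists (m : nat) (A : 'I_m -> 'rV[R]_n) (b : 'I_m -> R),
    forall x, P x <-> (forall i, dot (A i) x <= b i).

Definition is_face (R : realType) (n : nat) (Q F : vset R n) : Prop :=
  (exists x, F x) /\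
  exists c : 'rV[R]_n, forall x,
    F x <-> (Q x /\ forall q, Q q -> dot c q <= dot c x).

Definition normal_cone (R : realType) (n : nat) (Q F : vset R n) : vset R n :=
  fun y => forall x q, F x -> Q q -> dot y q <= dot y x.

Definition normal_fan (R : realType) (n : nat) (Q : vset R n) : vset R n -> Prop :=
  fun sigma => exists F, is_face Q F /\ forall y, sigma y <-> normal_cone Q F y.

Definition union_of (R : realType) (n : nat) (sigma : vset R n)
    (Sig : vset R n -> Prop) : Prop :=
  exists S : vset R n -> Prop, (forall tau, S tau -> Sig tau) /\
    forall y, sigma y <-> exists tau, S tau /\ tau y.

Definition Def_plus (R : realType) (n : nat) (Q P : vset R n) : Prop :=
  is_polyhedron P /\
  forall sigma, normal_fan P sigma -> union_of sigma (normal_fan Q).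

(* tangent cone C_F = sigma_F^vee (polar w.r.t. the sign convention of
   Cone(v' - v | v in F, v' in Q)) *)
Definition tangent_cone (R : realType) (n : nat) (Q F : vset R n) : vset R n :=
  fun x => forall y, normal_cone Q F y -> dot y x <= 0.

Definition lineal (R : realType) (n : nat) (C : vset R n) : vset R n :=
  fun x => C x /\ C (- x).

Definition tightly_contains (R : realType) (n : nat) (C : vset R n)
    (v : 'rV[R]_n) (P : vset R n) : Prop :=
  (forall x, P x -> C (x - v)) /\ (exists x, P x /\ lineal C (x - v)).

Definition aff_hull (R : realType) (n : nat) (S : vset R n) : vset R n :=
  fun z => exists (k : nat) (p : 'I_k -> 'rV[R]_n) (l : 'I_k -> R),
    \sum_(i < k) l i = 1 /\ (forall i, S (p i)) /\ z = \sum_(i < k) l i *: p i.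

Definition relint (R : realType) (n : nat) (S : vset R n) : vset R n :=
  fun x => S x /\ exists eps : R, 0 < eps /\
    forall z, aff_hull S z -> dot (z - x) (z - x) < eps -> S z.

(* Main.v *)
Require Import Defs.
From HB Require Import structures.
From mathcomp Require Import all_boot all_order all_algebra.
From mathcomp Require Import reals.
From mathcomp Require Import lra.
Import Order.TTheory GRing.Theory Num.Theory.
Local Open Scope ring_scope.

Section Aux.
Variables (R : realType) (n : nat).
Implicit Types (u w x : 'rV[R]_n).

Lemma dotC u w : dot u w = dot w u.
Proof. by rewrite /dot; apply eq_bigr => i _; rewrite mulrC. Qed.
Lemma dotDl u w x : dot (u + w) x = dot u x + dot w x.
Proof. by rewrite /dot -big_split; apply eq_bigr => i _; rewrite mxE mulrDl. Qed.
Lemma dotZl a u x : dot (a *: u) x = a * dot u x.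
Proof. by rewrite /dot mulr_sumr; apply eq_bigr => i _; rewrite mxE mulrA. Qed.
Lemma dotNl u x : dot (- u) x = - dot u x.
Proof. by rewrite /dot -sumrN; apply eq_bigr => i _; rewrite mxE mulNr. Qed.
Lemma dotBl u w x : dot (u - w) x = dot u x - dot w x.
Proof. by rewrite dotDl dotNl. Qed.
Lemma dotNr u x : dot u (- x) = - dot u x.
Proof. by rewrite dotC dotNl dotC. Qed.
Lemma dotBr u w x : dot x (u - w) = dot x u - dot x w.
Proof. by rewrite dotC dotBl !(dotC x). Qed.
Lemma dotZr a u x : dot x (a *: u) = a * dot x u.
Proof. by rewrite dotC dotZl dotC. Qed.
Lemma dot_ge0 u : 0 <= dot u u.
Proof. by apply: sumr_ge0 => i _; rewrite -expr2 sqr_ge0. Qed.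

Lemma relint_push (S : vset R n) y z : relint S y -> S z ->
  exists t : R, 0 < t /\ S ((1 + t) *: y - t *: z).
Proof.
case=> Sy [eps [eps0 H]] Sz.
set d := dot (y - z) (y - z).
have d0 : 0 <= d := dot_ge0 _.
have de : d + eps != 0 by rewrite lt0r_neq0 // ltr_wpDl.
set t := eps / (d + eps).
have t0 : 0 < t by apply divr_gt0 => //; rewrite ltr_wpDl.
have ht : t * (d + eps) = eps by rewrite /t divfK.
exists t; split => //.
apply H.
- exists 2%N, (fun i : 'I_2 => if val i == 0%N then y else z),
    (fun i : 'I_2 => if val i == 0%N then 1 + t else - t).
  split; [|split].
  + by rewrite !big_ord_recl big_ord0 /=; lra.
  + by move=> i; case: ifP.
  + by rewrite !big_ord_recl big_ord0 /= addr0 scaleNr.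
- have -> : (1 + t) *: y - t *: z - y = t *: (y - z).
    by rewrite scalerDl scale1r scalerBr addrAC [y + _]addrC addrK.
  rewrite dotZl dotZr -/d.
  rewrite mulrDr in ht.
  have td0 : 0 <= t * d by rewrite mulr_ge0 // ltW.
  have te : 0 < t * eps by rewrite mulr_gt0.
  have tl1 : t <= 1.
    by rewrite -(ler_pM2r eps0) mul1r; lra.
  have : t * (t * d) <= t * d by rewrite ler_piMl.
  lra.
Qed.
End Aux.

Theorem lemma2p4 (R : realType) (n : nat) (Q F : vset R n) (v y : 'rV[R]_n) :
  is_polyhedron Q -> is_face Q F -> relint (normal_cone Q F) y ->
  forall P : vset R n, Def_plus Q P ->
    (tightly_contains (tangent_cone Q F) v P <->
     ((forall x, P x -> dot y x <= dot y v) /\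
      (exists x, P x /\ dot y x = dot y v) /\
      (forall x, P x -> dot y x = dot y v -> lineal (tangent_cone Q F) (x - v)))).
Proof.
move=> _ [[f Ff] [c0 Hc0]] Hrel P [_ HP].
have Qf : Q f := ((Hc0 f).1 Ff).1.
have ny := Hrel.1.
have key1 : forall x, tangent_cone Q F x -> dot y x = 0 ->
    lineal (tangent_cone Q F) x.
  move=> x Tx yx0; split => // z Nz.
  have [t [t0 Nw]] := @relint_push R n _ _ _ Hrel Nz.
  have := Tx _ Nw; rewrite dotBl !dotZl yx0 dotNr mulr0 sub0r oppr_le0 => h.
  by rewrite oppr_le0 -(pmulr_rge0 _ t0).
split.
- case=> Hsub [g [Pg Lg]]; split; [|split].
  + move=> x Px; have := Hsub x Px y ny; rewrite dotBr; lra.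
  + exists g; split => //.
    have h1 := Lg.1 y ny; have h2 := Lg.2 y ny.
    rewrite dotNr dotBr in h2; rewrite dotBr in h1; lra.
  + move=> x Px e; apply key1; [exact: Hsub | by rewrite dotBr e subrr].
- case=> Hle [[g [Pg eg]] Hlin].
  pose G := fun x => P x /\ dot y x = dot y v.
  have fG : is_face P G.
    split; first by exists g.
    exists y => x; split.
    + by case=> Px ex; split => // q Pq; rewrite ex; exact: Hle.
    + case=> Px Hm; split => //.
      by have := Hle x Px; have := Hm g Pg; lra.
  have [S [HS HSeq]] := HP (normal_cone P G) (ex_intro _ G (conj fG (fun _ => iff_refl _))).
  have yG : normal_cone P G y.
    by move=> x q [Px ex] Pq; rewrite ex; exact: Hle.
  have [tau [Stau tauy]] := (HSeq y).1 yG.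
  have [F' [[[f' Ff'] [c Hc]] Htau]] := HS _ Stau.
  have sub : forall z, normal_cone Q F z -> normal_cone P G z.
    move=> z Nz; apply (HSeq z).2; exists tau; split => //.
    apply (Htau z).2 => x' q Fx' Qq.
    have Qx' : Q x' := ((Hc x').1 Fx').1.
    have yx' : normal_cone Q F' y := (Htau y).1 tauy.
    have e1 := ny f x' Ff Qx'.
    have e2 := yx' x' f Fx' Qf.
    have [t [t0 Nw]] := @relint_push R n _ _ _ Hrel Nz.
    have h := Nw f x' Ff Qx'.
    rewrite !dotBl !dotZl in h.
    have h2 := Nz f q Ff Qq.
    have e : dot y x' = dot y f by apply/eqP; rewrite eq_le e1 e2.
    rewrite e in h.
    have h3 : t * dot z f <= t * dot z x' by lra.
    rewrite ler_pM2l // in h3; lra.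
  split.
  + move=> x Px z Nz.
    have h := sub z Nz g x (conj Pg eg) Px.
    have [l1 l2] := Hlin g Pg eg.
    have := l1 z Nz; have := l2 z Nz.
    rewrite dotNr !dotBr; lra.
  + by exists g; split => //; apply Hlin.
Qed.
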